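(* Let $\mathbf{A}\in\mathbb{C}^{n\times n}$, let $\mathbf{b}\in\mathbb{C}^n$ be nonzero, and let $k\geq 1$ be such that the Arnoldi algorithm applied to $(\mathbf{A},\mathbf{b})$ does not break down before step $k$, i.e. $\dim\mathcal{K}_{k+1}(\mathbf{A},\mathbf{b})=k+1$. Then \[ \min_{0\leq j\leq k}\|\mathbf{r}_j^{\mathrm{F}}\|_2 \;\leq\; \sqrt{k+1}\,\cdot\,\|\mathbf{r}_k^{\mathrm{G}}\|_2 . \]
   Context: The Krylov subspace is $\mathcal{K}_k(\mathbf{A},\mathbf{b})=\operatorname{span}\{\mathbf{b},\mathbf{A}\mathbf{b},\dots,\mathbf{A}^{k-1}\mathbf{b}\}$. The Arnoldi algorithm produces an orthonormal basis $\mathbf{Q}_k=[\mathbf{q}_1,\dots,\mathbf{q}_k]$ of $\mathcal{K}_k(\mathbf{A},\mathbf{b})$ with $\mathbf{q}_1=\mathbf{b}/\|\mathbf{b}\|_2$, and a $(k+1)\times k$ upper Hessenberg matrix $\mathbf{H}_{k+1,k}$ (entries $h_{i,j}$, with $h_{j+1,j}>0$) satisfying $\mathbf{A}\mathbf{Q}_k=\mathbf{Q}_{k+1}\mathbf{H}_{k+1,k}$; $\mathbf{H}_k$ denotes $\mathbf{H}_{k+1,k}$ with its last row deleted. With $\mathbf{e}_1=[1,0,\dots,0]^{\mathsf T}$, the FOM and GMRES iterates (zero initial guess, $\mathbf{x}_0^{\mathrm F}=\mathbf{x}_0^{\mathrm G}=\mathbf{0}$) are, for $j\ge1$, $\mathbf{x}_j^{\mathrm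 F}=\|\mathbf{b}\|_2\mathbf{Q}_j\mathbf{H}_j^{-1}\mathbf{e}_1$ and $\mathbf{x}_j^{\mathrm G}=\|\mathbf{b}\|_2\mathbf{Q}_j\mathbf{H}_{j+1,j}^{\dagger}\mathbf{e}_1$ ($\dagger$ = pseudoinverse); equivalently $\mathbf{x}_j^{\mathrm G}$ minimizes $\|\mathbf{b}-\mathbf{A}\mathbf{x}\|_2$ over $\mathbf{x}\in\mathcal{K}_j(\mathbf{A},\mathbf{b})$. Residuals: $\mathbf{r}_j^{\mathrm F}=\mathbf{b}-\mathbf{A}\mathbf{x}_j^{\mathrm F}$, $\mathbf{r}_j^{\mathrm G}=\mathbf{b}-\mathbf{A}\mathbf{x}_j^{\mathrm G}$ (so $\mathbf{r}_0^{\mathrm F}=\mathbf{r}_0^{\mathrm G}=\mathbf{b}$). Convention: if $\mathbf{H}_j$ is singular, the FOM iterate is undefined and $\|\mathbf{r}_j^{\mathrm F}\|_2$ is defined to be $+\infty$. *)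

(* Defs.v *)
From HB Require Import structures.
From mathcomp Require Import all_boot all_order all_algebra.
Set Implicit Arguments. Unset Strict Implicit. Unset Printing Implicit Defensive.
Import Order.TTheory GRing.Theory Num.Theory.
Local Open Scope ring_scope.

Section Krylov.
Variable C : numClosedFieldType.

Definition norm2 n (v : 'cV[C]_n) : C := sqrtC (\sum_i `|v i 0| ^+ 2).

Definition ctrmx m p (M : 'M[C]_(m, p)) : 'M[C]_(p, m) := (map_mx (fun z => z^*) M)^T.

(* Krylov matrix [b, A b, ..., A^(m-1) b]; its column space is K_m(A,b) *)
Definition krylov n (A : 'M[C]_n) (b : 'cV[C]_n) m : 'M[C]_(n, m) :=
  \matrix_(i < n, j < m) ((A ^+ j) *m b) i 0.

Definition mxe m p (M : 'M[C]_(m, p)) (a c : nat) : C :=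
  match @insub _ (fun x => x < m)%N 'I_m a, @insub _ (fun x => x < p)%N 'I_p c with
  | Some a', Some c' => M a' c'
  | _, _ => 0
  end.

Definition leadcols n m (Q : 'M[C]_(n, m)) j : 'M[C]_(n, j) :=
  \matrix_(i < n, l < j) mxe Q i l.
Definition leadblock m p (H : 'M[C]_(m, p)) j : 'M[C]_j :=
  \matrix_(a < j, c < j) mxe H a c.

Definition e1 j : 'cV[C]_j := \col_(a < j) (a == 0%N :> nat)%:R.

Definition arnoldi_output n k (A : 'M[C]_n) (b : 'cV[C]_n)
    (Q : 'M[C]_(n, k.+1)) (H : 'M[C]_(k.+1, k)) : Prop :=
  [/\ ctrmx Q *m Q = 1%:M,
      (forall i : 'I_n, Q i ord0 = (norm2 b)^-1 * b i 0),
      A *m leadcols Q k = Q *m H,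
      (forall (i : 'I_k.+1) (j : 'I_k), (j.+1 < i)%N -> H i j = 0) &
      (forall (i : 'I_k.+1) (j : 'I_k), (i : nat) = j.+1 -> 0 < H i j)].

(* FOM residual r_j^F = b - A x_j^F with x_j^F = ||b|| Q_j H_j^{-1} e_1;
   None (i.e. norm +oo) when H_j is singular. For j = 0, Q_0, H_0 are empty,
   H_0 is invertible and x_0^F = 0, so r_0^F = b. *)
Definition fom_res n k (A : 'M[C]_n) (b : 'cV[C]_n)
    (Q : 'M[C]_(n, k.+1)) (H : 'M[C]_(k.+1, k)) (j : nat) : option 'cV[C]_n :=
  if leadblock H j \in unitmx then
    Some (b - A *m (norm2 b *: (leadcols Q j *m (invmx (leadblock H j) *m e1 j))))
  else None.

End Krylov.

(* Main.v *)
Require Import Defs.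
From HB Require Import structures.
From mathcomp Require Import all_boot all_order all_algebra.
From mathcomp Require Import zify.
Import Order.TTheory GRing.Theory Num.Theory.
Local Open Scope ring_scope.
Set Implicit Arguments. Unset Strict Implicit. Unset Printing Implicit Defensive.


Lemma mxeE (C : numClosedFieldType) m p (M : 'M[C]_(m, p)) (i : 'I_m) (j : 'I_p) :
  mxe M i j = M i j.
Proof.
rewrite /mxe (insubT (fun x => x < m)%N (ltn_ord i)) (insubT (fun x => x < p)%N (ltn_ord j)).
by congr (M _ _); apply: val_inj.
Qed.

Lemma mxe_outr (C : numClosedFieldType) m p (M : 'M[C]_(m, p)) a c :
  (p <= c)%N -> mxe M a c = 0.
Proof.
move=> h; rewrite /mxe; case: (insub a) => // a'.
by rewrite insubF // ltnNge h.
Qed.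

Lemma mxe_outl (C : numClosedFieldType) m p (M : 'M[C]_(m, p)) a c :
  (m <= a)%N -> mxe M a c = 0.
Proof.
by move=> h; rewrite /mxe insubF // ltnNge h.
Qed.

Lemma mxe_inj (C : numClosedFieldType) m p (M N : 'M[C]_(m, p)) :
  (forall a c, mxe M a c = mxe N a c) -> M = N.
Proof. by move=> h; apply/matrixP => i j; rewrite -!mxeE. Qed.

Lemma mxe_gen (C : numClosedFieldType) m p (M : 'M[C]_(m, p)) (P : nat -> nat -> C -> Prop) :
  (forall (i : 'I_m) (j : 'I_p), P i j (M i j)) ->
  (forall a c, ~~ ((a < m) && (c < p))%N -> P a c 0) ->
  forall a c, P a c (mxe M a c).
Proof.
move=> h1 h2 a c; case: (ltnP a m) => ha; last by rewrite mxe_outl //; apply: h2; rewrite ltnNge ha.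
case: (ltnP c p) => hc; last by rewrite mxe_outr //; apply: h2; rewrite (ltnNge c) hc andbF.
by have := h1 (Ordinal ha) (Ordinal hc); rewrite -mxeE.
Qed.

Lemma mxe_matrix (C : numClosedFieldType) m p (E : nat -> nat -> C) a c :
  mxe (\matrix_(i < m, j < p) E i j) a c = if ((a < m) && (c < p))%N then E a c else 0.
Proof.
apply: (@mxe_gen _ _ _ _ (fun a c x => x = if ((a < m) && (c < p))%N then E a c else 0)).
  by move=> i j; rewrite mxE !ltn_ord.
by move=> a' c' /negbTE ->.
Qed.

Lemma mxe_mul (C : numClosedFieldType) m p q (M : 'M[C]_(m, p)) (N : 'M[C]_(p, q)) a c :
  mxe (M *m N) a c = \sum_(0 <= l < p) mxe M a l * mxe N l c.
Proof.
apply: (@mxe_gen _ _ _ _ (fun a c x => x = \sum_(0 <= l < p) mxe M a l * mxe N l c)).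
  by move=> i j; rewrite mxE big_mkord; apply: eq_bigr => l _; rewrite !mxeE.
move=> a' c'; rewrite negb_and -!leqNgt => /orP[h|h]; symmetry; apply: big1 => l _.
  by rewrite mxe_outl ?mul0r.
by rewrite (mxe_outr N) ?mulr0.
Qed.

Lemma mxeD (C : numClosedFieldType) m p (M N : 'M[C]_(m, p)) a c :
  mxe (M + N) a c = mxe M a c + mxe N a c.
Proof.
apply: (@mxe_gen _ _ _ _ (fun a c x => x = mxe M a c + mxe N a c)).
  by move=> i j; rewrite mxE !mxeE.
move=> a' c'; rewrite negb_and -!leqNgt => /orP[h|h].
  by rewrite !mxe_outl ?addr0.
by rewrite !mxe_outr ?addr0.
Qed.

Lemma mxeN (C : numClosedFieldType) m p (M : 'M[C]_(m, p)) a c :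
  mxe (- M) a c = - mxe M a c.
Proof.
apply: (@mxe_gen _ _ _ _ (fun a c x => x = - mxe M a c)).
  by move=> i j; rewrite mxE !mxeE.
move=> a' c'; rewrite negb_and -!leqNgt => /orP[h|h].
  by rewrite !mxe_outl ?oppr0.
by rewrite !mxe_outr ?oppr0.
Qed.

Lemma mxeB (C : numClosedFieldType) m p (M N : 'M[C]_(m, p)) a c :
  mxe (M - N) a c = mxe M a c - mxe N a c.
Proof. by rewrite mxeD mxeN. Qed.

Lemma mxeZ (C : numClosedFieldType) m p x (M : 'M[C]_(m, p)) a c :
  mxe (x *: M) a c = x * mxe M a c.
Proof.
apply: (@mxe_gen _ _ _ _ (fun a c y => y = x * mxe M a c)).
  by move=> i j; rewrite mxE !mxeE.
move=> a' c'; rewrite negb_and -!leqNgt => /orP[h|h].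
  by rewrite !mxe_outl ?mulr0.
by rewrite !mxe_outr ?mulr0.
Qed.

Lemma mxe0 (C : numClosedFieldType) m p a c : mxe (0 : 'M[C]_(m, p)) a c = 0.
Proof.
apply: (@mxe_gen _ _ _ _ (fun a c y => y = 0)) => //.
by move=> i j; rewrite mxE.
Qed.

Lemma sum_single (C : numClosedFieldType) N (F : 'I_N -> C) i0 :
  (forall i, i != i0 -> F i = 0) -> \sum_i F i = F i0.
Proof.
move=> h; rewrite (bigD1 i0) //= big1 ?addr0 // => i /h //.
Qed.

Lemma natsum_single (C : numClosedFieldType) N (F : nat -> C) i0 :
  (forall i, (i < N)%N -> i != i0 -> F i = 0) -> \sum_(0 <= i < N) F i = if (i0 < N)%N then F i0 else 0.
Proof.
move=> h; rewrite big_mkord; case: ifP => hi.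
  rewrite (sum_single _ (i0 := Ordinal hi)) // => i; rewrite -(inj_eq val_inj) /= => hne; exact: h.

by apply: big1 => i _; apply: h => //; apply: contraFN hi => /eqP <-.
Qed.


Definition Hsq (C : numClosedFieldType) k (H : 'M[C]_(k.+1, k)) : 'M[C]_(k.+1) :=
  \matrix_(a < k.+1, c < k.+1) mxe H a c.

Lemma mxe_Hsq (C : numClosedFieldType) k (H : 'M[C]_(k.+1, k)) a c :
  mxe (Hsq H) a c = mxe H a c.
Proof.
rewrite mxe_matrix; case: ifP => // /negbT; rewrite negb_and -!leqNgt => /orP[h|h].
  by rewrite mxe_outl.
by rewrite mxe_outr // ltnW.
Qed.

Lemma AQz (C : numClosedFieldType) n k (A : 'M[C]_n) (Q : 'M[C]_(n, k.+1)) (H : 'M[C]_(k.+1, k)) :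
  A *m leadcols Q k = Q *m H ->
  forall z : 'cV[C]_(k.+1), mxe z k 0 = 0 -> A *m (Q *m z) = Q *m (Hsq H *m z).
Proof.
move=> hAQ z zk.
pose zt := \matrix_(l < k, j < 1) mxe z l j.
have zk' : forall c, mxe z k c = 0.
  by case=> [|c] //; rewrite mxe_outr.
have e1 : Q *m z = leadcols Q k *m zt.
  apply: mxe_inj => a c; rewrite !mxe_mul big_nat_recr //= zk' mulr0 addr0.
  apply: eq_big_nat => l /andP[_ hl]; rewrite /leadcols /zt !mxe_matrix hl /=.
  case: (ltnP a n) => ha; case: (ltnP c 1) => hc //.
  - by rewrite (mxe_outr z) ?mulr0.
  - by rewrite (mxe_outl Q) ?mul0r.
  - by rewrite (mxe_outl Q) ?mul0r.
have e2 : H *m zt = Hsq H *m z.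
  apply: mxe_inj => a c; rewrite !mxe_mul big_nat_recr //= mxe_Hsq (mxe_outr H) // mul0r addr0.
  apply: eq_big_nat => l /andP[_ hl]; rewrite mxe_Hsq /zt !mxe_matrix hl /=.
  case: (ltnP c 1) => hc //.
  by rewrite (mxe_outr z) ?mulr0.
by rewrite e1 mulmxA hAQ -mulmxA e2.
Qed.


Lemma sum_sq (C : numClosedFieldType) N (a : nat -> C) : (forall l, 0 <= a l) ->
  (\sum_(0 <= l < N) a l) ^+ 2 <= N%:R * \sum_(0 <= l < N) a l ^+ 2.
Proof.
move=> a0.
have Ra : forall l, a l \is Num.real by move=> l; apply: ger0_real.
have e1 : (\sum_(0 <= l < N) a l) ^+ 2 *+ 2 =
   \sum_(0 <= i < N) \sum_(0 <= j < N) (a i * a j *+ 2).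
  rewrite expr2 mulr_suml -sumrMnl; apply: eq_bigr => i _.
  by rewrite mulr_sumr -sumrMnl.
have e2 : \sum_(0 <= i < N) \sum_(0 <= j < N) (a i ^+ 2 + a j ^+ 2) =
   (N%:R * \sum_(0 <= l < N) a l ^+ 2) *+ 2.
  under eq_bigr do rewrite big_split /= sumr_const_nat subn0.
  rewrite big_split /= sumr_const_nat subn0 -sumrMnl mulr2n; congr (_ + _).
    by rewrite mulr_natl sumrMnl.
  by rewrite mulr_natl sumrMnl.
have : (\sum_(0 <= l < N) a l) ^+ 2 *+ 2 <= (N%:R * \sum_(0 <= l < N) a l ^+ 2) *+ 2.
  rewrite e1 -e2; apply: ler_sum => i _; apply: ler_sum => j _.
  exact: (real_leif_mean_square_scaled (Ra i) (Ra j)).1.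
by rewrite ler_pMn2r.
Qed.

Lemma sum_sqrt (C : numClosedFieldType) N (a : nat -> C) : (forall l, 0 <= a l) ->
  \sum_(0 <= l < N) a l <= sqrtC N%:R * sqrtC (\sum_(0 <= l < N) a l ^+ 2).
Proof.
move=> a0.
have S0 : 0 <= \sum_(0 <= l < N) a l by apply: sumr_ge0.
have T0 : 0 <= \sum_(0 <= l < N) a l ^+ 2 by apply: sumr_ge0 => l _; apply: exprn_ge0.
rewrite -sqrtCM ?qualifE /= ?ler0n //.
rewrite -{1}(sqrCK S0) ler_sqrtC ?qualifE /= ?exprn_ge0 ?mulr_ge0 ?ler0n //.
exact: sum_sq.
Qed.

Lemma norm2_nat (C : numClosedFieldType) m (v : 'cV[C]_m) :
  norm2 v = sqrtC (\sum_(0 <= l < m) `|mxe v l 0| ^+ 2).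
Proof.
by rewrite /norm2 big_mkord; congr sqrtC; apply: eq_bigr => i _; rewrite (mxeE v i ord0).
Qed.

Lemma sumsqE (C : numClosedFieldType) m (v : 'cV[C]_m) :
  \sum_i `|v i 0| ^+ 2 = (ctrmx v *m v) 0 0.
Proof.
rewrite mxE; apply: eq_bigr => i _; rewrite /ctrmx !mxE normCK mulrC.
by [].
Qed.

Lemma ctrmx_mul (C : numClosedFieldType) m n p (M : 'M[C]_(m, n)) (N : 'M[C]_(n, p)) :
  ctrmx (M *m N) = ctrmx N *m ctrmx M.
Proof.
apply/matrixP => i j; rewrite /ctrmx !mxE rmorph_sum; apply: eq_bigr => l _.
by rewrite !mxE rmorphM mulrC.
Qed.

Lemma norm2_Q (C : numClosedFieldType) n p (Q : 'M[C]_(n, p)) (v : 'cV[C]_p) :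
  ctrmx Q *m Q = 1%:M -> norm2 (Q *m v) = norm2 v.
Proof.
move=> hQ; rewrite /norm2 !sumsqE; congr (sqrtC (_ _ _)).
by rewrite ctrmx_mul -mulmxA (mulmxA (ctrmx Q)) hQ mul1mx.
Qed.

Lemma norm2_eq0 (C : numClosedFieldType) m (v : 'cV[C]_m) : norm2 v = 0 -> v = 0.
Proof.
rewrite /norm2 => /eqP; rewrite sqrtC_eq0 => /eqP /psumr_eq0P h.
apply/matrixP => i j; rewrite (ord1 j) mxE.
have /eqP := h (fun i _ => exprn_ge0 2 (normr_ge0 _)) i isT.
by rewrite expf_eq0 /= normr_eq0 => /eqP.
Qed.

Lemma norm2_ge0 (C : numClosedFieldType) m (v : 'cV[C]_m) : 0 <= norm2 v.
Proof. by rewrite /norm2 sqrtC_ge0 sumr_ge0 // => i _; apply: exprn_ge0. Qed.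


Definition E0 (C : numClosedFieldType) k : 'cV[C]_(k.+1) :=
  \matrix_(a < k.+1, j < 1) (((a : nat) == 0%N)%:R).

Lemma mxe_E0 (C : numClosedFieldType) k a c :
  mxe (E0 C k) a c = if ((a < k.+1) && (c < 1))%N then (a == 0%N)%:R else 0.
Proof. exact: (mxe_matrix _ _ (fun a _ => ((a == 0%N)%:R : C))). Qed.

Lemma hessH (C : numClosedFieldType) n k (A : 'M[C]_n) b Q (H : 'M[C]_(k.+1, k)) :
  arnoldi_output A b Q H -> forall a c, (c.+1 < a)%N -> mxe H a c = 0.
Proof.
case=> _ _ _ h _.
apply: (@mxe_gen _ _ _ _ (fun a c x => (c.+1 < a)%N -> x = 0)) => //; exact: h.
Qed.

Lemma subdH (C : numClosedFieldType) n k (A : 'M[C]_n) b Q (H : 'M[C]_(k.+1, k)) :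
  arnoldi_output A b Q H -> forall c, (c < k)%N -> 0 < mxe H c.+1 c.
Proof.
case=> _ _ _ _ h c hc.
have hc1 : (c.+1 < k.+1)%N by [].
by rewrite (mxeE H (Ordinal hc1) (Ordinal hc)); apply: h.
Qed.

Lemma norm2_neq0 (C : numClosedFieldType) n (b : 'cV[C]_n) : b != 0 -> norm2 b != 0.
Proof. by move=> hb; apply: contra hb => /eqP /norm2_eq0 ->. Qed.

Lemma b_Q (C : numClosedFieldType) n k (A : 'M[C]_n) b Q (H : 'M[C]_(k.+1, k)) :
  arnoldi_output A b Q H -> b != 0 -> b = Q *m (norm2 b *: E0 C k).
Proof.
case=> _ hq _ _ _ hb; have hb0 := norm2_neq0 hb.
apply/matrixP => i j; rewrite (ord1 j).
transitivity (mxe (Q *m (norm2 b *: E0 C k)) i 0); last by rewrite (mxeE _ i ord0).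
rewrite mxe_mul (natsum_single _ (i0 := 0%N)) //=.
  rewrite mxeZ mxe_E0 /= (mxeE Q i ord0) hq mulr1 mulrC mulrA mulfV //.
  by rewrite mul1r.
by move=> l hl hl0; rewrite mxeZ mxe_E0 hl /= (negbTE hl0) !mulr0.
Qed.


Lemma supp_step (C : numClosedFieldType) k (H : 'M[C]_(k.+1, k)) :
  (forall a c, (c.+1 < a)%N -> mxe H a c = 0) ->
  forall (z : 'cV[C]_(k.+1)) j, (forall i c, (j < i)%N -> mxe z i c = 0) ->
  forall i c, (j.+1 < i)%N -> mxe (Hsq H *m z) i c = 0.
Proof.
move=> hh z j hz i c hi; rewrite mxe_mul; apply: big1 => l _.
case: (leqP l j) => hl.
  by rewrite mxe_Hsq hh ?mul0r // (leq_ltn_trans _ hi).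
by rewrite hz ?mulr0.
Qed.

Definition Zk (C : numClosedFieldType) k (H : 'M[C]_(k.+1, k)) (be : C) j : 'cV[C]_(k.+1) :=
  ((Hsq H) ^+ j) *m (be *: E0 C k).

Lemma krylov_pow (C : numClosedFieldType) n k (A : 'M[C]_n) b Q (H : 'M[C]_(k.+1, k)) :
  arnoldi_output A b Q H -> b != 0 -> forall j, (j <= k)%N ->
  A ^+ j *m b = Q *m Zk H (norm2 b) j /\ forall i c, (j < i)%N -> mxe (Zk H (norm2 b) j) i c = 0.
Proof.
move=> har hb; have hh := hessH har; have hbQ := b_Q har hb.
case: (har) => _ _ hAQ _ _.
elim=> [|j IH] hj.
  rewrite /Zk !expr0 !mul1mx; split => // i c hi.
  by rewrite mxeZ mxe_E0 eqn0Ngt hi; case: ifP; rewrite mulr0.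
have [e1 e2] := IH (ltnW hj).
split.
  rewrite exprS -mulmxA e1 (AQz hAQ) ?e2 //.
  by rewrite /Zk exprS -mulmxA.
move=> i c hi; rewrite /Zk exprS -mulmxA.
exact: (supp_step hh e2).
Qed.

Lemma gmres_res (C : numClosedFieldType) n k (A : 'M[C]_n) b Q (H : 'M[C]_(k.+1, k)) c0 :
  arnoldi_output A b Q H -> b != 0 ->
  exists X : 'cV[C]_(k.+1),
    b - A *m (krylov A b k *m c0) = Q *m (norm2 b *: E0 C k - Hsq H *m X).
Proof.
move=> har hb; have hbQ := b_Q har hb.
case: (har) => _ _ hAQ _ _.
pose Zmat := \matrix_(i < k.+1, j < k) mxe (Zk H (norm2 b) j) i 0.
have hK : krylov A b k = Q *m Zmat.
  apply/matrixP => i j; rewrite /krylov [LHS]mxE.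
  rewrite (krylov_pow har hb (ltnW (ltn_ord j))).1 !mxE; apply: eq_bigr => l _.
  by rewrite [Zmat l j]mxE (mxeE _ l ord0).
exists (Zmat *m c0).
rewrite hK -mulmxA (AQz hAQ).
  by rewrite {1}hbQ mulmxBr.
rewrite mxe_mul big1 // => l _.
rewrite (mxe_matrix _ _ (fun i j => mxe (Zk H (norm2 b) j) i 0)).
case: ifP => [/andP[_ hl]|_]; last by rewrite mul0r.
by rewrite (krylov_pow har hb (ltnW hl)).2 ?mul0r.
Qed.


Lemma w_exists (C : numClosedFieldType) n k (A : 'M[C]_n) b Q (H : 'M[C]_(k.+1, k)) :
  arnoldi_output A b Q H -> exists w : 'rV[C]_(k.+1), w *m H = 0 /\ mxe w 0 0 = 1.
Proof.
move=> har; have hh := hessH har; have hs := subdH har.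
have nrf : ~~ row_free H.
  by rewrite /row_free; apply/negP => /eqP e; have := rank_leq_col H; rewrite e ltnn.
have : kermx H != 0 by rewrite kermx_eq0.
case/rowV0Pn => v /sub_kermxP hv vnz.
have v0 : mxe v 0 0 != 0.
  apply: contra vnz => /eqP v00.
  have all0 : forall t, (t <= k)%N -> forall i, (i <= t)%N -> mxe v 0 i = 0.
    elim=> [_ i|t IH ht i hi]; first by rewrite leqn0 => /eqP ->.
    rewrite leq_eqVlt in hi; case/orP: hi => [/eqP ->| hi]; last exact: IH (ltnW ht) _ hi.
    have := congr1 (fun M => mxe M 0 t) hv; rewrite /= mxe_mul mxe0.
    rewrite (natsum_single _ (i0 := t.+1)).
      rewrite ltnS ht => /eqP; rewrite mulf_eq0 => /orP[/eqP //|].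
      by rewrite gt_eqF // hs.
    move=> l hl hlt; case: (leqP l t) => hlt2; first by rewrite IH ?mul0r // ltnW.
    rewrite hh ?mulr0 //; rewrite ltn_neqAle eq_sym hlt /=; exact: hlt2.
  apply/eqP; apply: mxe_inj => a c; rewrite mxe0.
  case: a => [|a]; last by rewrite mxe_outl.
  case: (leqP c k) => hc; first exact: all0 hc _ (leqnn c).
  by rewrite mxe_outr.
exists ((mxe v 0 0)^-1 *: v); split.
  by rewrite -scalemxAl hv scaler0.
by rewrite mxeZ mulVf.
Qed.


Definition pad (C : numClosedFieldType) k J (y : 'cV[C]_J) : 'cV[C]_(k.+1) :=
  \matrix_(a < k.+1, j < 1) mxe y a j.

Lemma mxe_pad (C : numClosedFieldType) k J (y : 'cV[C]_J) a c : (J <= k.+1)%N ->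
  mxe (pad k y) a c = mxe y a c.
Proof.
move=> hJ; rewrite /pad mxe_matrix; case: ifP => // /negbT; rewrite negb_and -!leqNgt.
case/orP => h; first by rewrite mxe_outl // (leq_trans hJ h).
by rewrite mxe_outr.
Qed.

Lemma lead_pad (C : numClosedFieldType) n k J (Q : 'M[C]_(n, k.+1)) (y : 'cV[C]_J) :
  (J <= k.+1)%N -> leadcols Q J *m y = Q *m pad k y.
Proof.
move=> hJ; apply: mxe_inj => a c; rewrite !mxe_mul (@big_cat_nat _ _ _ J 0 k.+1 _ _ (leq0n J) hJ) /=.
rewrite [X in _ = _ + X]big1_seq ?addr0; last first.
  move=> l /andP[_]; rewrite mem_index_iota => /andP[hl _].
  by rewrite mxe_pad // (mxe_outl y) ?mulr0.
apply: eq_big_nat => l /andP[_ hl]; rewrite mxe_pad // /leadcols mxe_matrix hl andbT.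
by case: ifP => // /negbT; rewrite -leqNgt => h; rewrite (mxe_outl Q) ?mul0r.
Qed.

Lemma Hsq_pad_lt (C : numClosedFieldType) k J (H : 'M[C]_(k.+1, k)) (y : 'cV[C]_J) i c :
  (J <= k.+1)%N -> (i < J)%N -> mxe (Hsq H *m pad k y) i c = mxe (leadblock H J *m y) i c.
Proof.
move=> hJ hi; rewrite !mxe_mul (@big_cat_nat _ _ _ J 0 k.+1 _ _ (leq0n J) hJ) /=.
rewrite [X in _ + X = _]big1_seq ?addr0; last first.
  move=> l /andP[_]; rewrite mem_index_iota => /andP[hl _].
  by rewrite mxe_pad // (mxe_outl y) ?mulr0.
apply: eq_big_nat => l /andP[_ hl]; rewrite mxe_pad // /leadblock mxe_matrix hl hi mxe_Hsq.
by [].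
Qed.

Lemma Hsq_pad_gt (C : numClosedFieldType) k J (H : 'M[C]_(k.+1, k)) (y : 'cV[C]_J) i c :
  (forall a c, (c.+1 < a)%N -> mxe H a c = 0) ->
  (J <= k.+1)%N -> (J < i)%N -> mxe (Hsq H *m pad k y) i c = 0.
Proof.
move=> hh hJ hi; rewrite mxe_mul big1 // => l _.
case: (ltnP l J) => hl.
  by rewrite mxe_Hsq hh ?mul0r // (leq_ltn_trans hl hi).
by rewrite mxe_pad // (mxe_outl y) ?mulr0.
Qed.

Lemma wHsq (C : numClosedFieldType) k (H : 'M[C]_(k.+1, k)) (w : 'rV[C]_(k.+1)) :
  w *m H = 0 -> w *m Hsq H = 0.
Proof.
move=> hw; apply: mxe_inj => a c; rewrite mxe0 -(mxe0 C 1 k a c) -hw !mxe_mul.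
by apply: eq_bigr => l _; rewrite mxe_Hsq.
Qed.


Lemma wJ_single (C : numClosedFieldType) k J (w : 'rV[C]_(k.+1)) (u : 'cV[C]_(k.+1)) :
  (J <= k)%N -> (forall i, i != J -> mxe u i 0 = 0) ->
  mxe (w *m u) 0 0 = mxe w 0 J * mxe u J 0.
Proof.
move=> hJ hu; rewrite mxe_mul (natsum_single _ (i0 := J)) ?ltnS ?hJ // => l _ hl.
by rewrite hu ?mulr0.
Qed.

Lemma G_unit (C : numClosedFieldType) n k (A : 'M[C]_n) b Q (H : 'M[C]_(k.+1, k)) (w : 'rV[C]_(k.+1)) J :
  arnoldi_output A b Q H -> w *m H = 0 -> (J <= k)%N -> mxe w 0 J != 0 ->
  leadblock H J \in unitmx.
Proof.
move=> har hw hJ wJ; have hh := hessH har; have hs := subdH har.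
have hJ1 : (J <= k.+1)%N by apply: leqW.
rewrite -unitmx_tr -row_free_unit; apply: inj_row_free => v hv.
have hz : leadblock H J *m v^T = 0 by rewrite -(trmxK (leadblock H J)) -trmx_mul hv trmx0.
suff : v^T = 0 by move=> e; rewrite -(trmxK v) e trmx0.
set z := v^T in hz *; set Z := pad k z; set u := Hsq H *m Z.
have u_other : forall i, i != J -> mxe u i 0 = 0.
  move=> i hi; case: (ltngtP i J) => hiJ.
  - by rewrite /u Hsq_pad_lt // hz mxe0.
  - by rewrite /u Hsq_pad_gt.
  - by rewrite hiJ eqxx in hi.
have uJ : mxe u J 0 = 0.
  have := wJ_single w hJ u_other.
  rewrite /u mulmxA wHsq // mul0mx mxe0 => /esym/eqP; rewrite mulf_eq0 (negbTE wJ) /=.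
  by move/eqP.
have u0 : forall i, mxe u i 0 = 0.
  by move=> i; case: (eqVneq i J) => [->|]; [exact: uJ | exact: u_other].
have Z0 : forall t c, (J - t <= c)%N -> mxe Z c 0 = 0.
  elim=> [|t IH] c hc.
    by rewrite subn0 in hc; rewrite /Z mxe_pad // mxe_outl.
  case: (leqP (J - t) c) => hc2; first exact: IH.
  have ec : c.+1 = (J - t)%N by lia.
  have hck : (c < k)%N by lia.
  have := u0 c.+1; rewrite /u mxe_mul (natsum_single _ (i0 := c)); last first.
    move=> l _ hl; case: (ltngtP l c) => hlc.
    - by rewrite mxe_Hsq hh ?mul0r.
    - by rewrite IH ?mulr0 // -ec.
    - by rewrite hlc eqxx in hl.
  rewrite ltnS (ltnW hck) mxe_Hsq => /eqP; rewrite mulf_eq0 gt_eqF ?hs //=.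
  by move/eqP.
apply: mxe_inj => a c; rewrite mxe0.
case: c => [|c]; last by rewrite mxe_outr.
by have := Z0 J a; rewrite subnn /Z mxe_pad // => ->.
Qed.

Lemma mxe_e1 (C : numClosedFieldType) J a c :
  mxe (e1 C J) a c = if ((a < J) && (c < 1))%N then (a == 0%N)%:R else 0.
Proof. exact: (mxe_matrix _ _ (fun a _ => ((a == 0%N)%:R : C))). Qed.

Lemma fom_bound (C : numClosedFieldType) n k (A : 'M[C]_n) b Q (H : 'M[C]_(k.+1, k))
    (w : 'rV[C]_(k.+1)) J :
  arnoldi_output A b Q H -> b != 0 -> w *m H = 0 -> mxe w 0 0 = 1 -> (J <= k)%N ->
  mxe w 0 J != 0 ->
  exists r, fom_res A b Q H J = Some r /\ `|mxe w 0 J| * norm2 r = norm2 b.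
Proof.
move=> har hb hw w0 hJ wJ.
have hU := G_unit har hw hJ wJ; have hh := hessH har; have hbQ := b_Q har hb.
have hJ1 : (J <= k.+1)%N by apply: leqW.
case: (har) => hQ _ hAQ _ _.
set G := leadblock H J in hU *.
set y := invmx G *m e1 C J.
have hGy : G *m y = e1 C J by rewrite /y mulKVmx.
exists (b - A *m (norm2 b *: (leadcols Q J *m y))); split.
  by rewrite /fom_res -/G hU.
set T := E0 C k - Hsq H *m pad k y.
have er : b - A *m (norm2 b *: (leadcols Q J *m y)) = Q *m (norm2 b *: T).
  rewrite lead_pad // scalemxAr (AQz hAQ); last first.
    by rewrite mxeZ mxe_pad // mxe_outl ?mulr0.
  by rewrite {1}hbQ -mulmxBr /T scalerBr scalemxAr.
have T_other : forall i, i != J -> mxe T i 0 = 0.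
  move=> i hi; rewrite /T mxeB mxe_E0; case: (ltngtP i J) => hiJ.
  - rewrite Hsq_pad_lt // hGy mxe_e1 hiJ (leq_trans hiJ hJ1) /=.
    by rewrite subrr.
  - rewrite Hsq_pad_gt // subr0.
    by case: ifP => // _; rewrite eqn0Ngt (leq_ltn_trans (leq0n J) hiJ).
  - by rewrite hiJ eqxx in hi.
have wT : mxe w 0 J * mxe T J 0 = 1.
  rewrite -(wJ_single w hJ T_other) /T mulmxBr mulmxA wHsq // mul0mx subr0.
  rewrite (wJ_single (J := 0%N) w (leq0n k)); last first.
    by move=> i hi; rewrite mxe_E0 (negbTE hi); case: ifP.
  by rewrite w0 mxe_E0 /= mulr1.
rewrite er norm2_Q // norm2_nat (natsum_single _ (i0 := J)); last first.
  by move=> l _ hl; rewrite mxeZ T_other ?mulr0 ?normr0 // expr0n.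
rewrite ltnS hJ sqrCK ?normr_ge0 // -normrM mxeZ mulrCA wT mulr1.
by rewrite ger0_norm // norm2_ge0.
Qed.


Lemma exists_max (C : numClosedFieldType) (f : nat -> C) m :
  (forall i, f i \is Num.real) ->
  exists J, (J <= m)%N /\ forall i, (i <= m)%N -> f i <= f J.
Proof.
move=> Rf; elim: m => [|m [J [hJ IH]]].
  by exists 0%N; split => // i; rewrite leqn0 => /eqP ->.
case/orP: (real_leVge (Rf J) (Rf m.+1)) => h.
  exists m.+1; split => // i; rewrite leq_eqVlt => /orP[/eqP -> //|hi].
  exact: le_trans (IH i hi) h.
exists J; split => [|i]; first exact: leqW.
rewrite leq_eqVlt => /orP[/eqP -> //|hi].
exact: IH.
Qed.

Unset Implicit Arguments.
Set Strict Implicit.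

Theorem theorem2p1 (C : numClosedFieldType) (n k : nat)
    (A : 'M[C]_n) (b : 'cV[C]_n)
    (Q : 'M[C]_(n, k.+1)) (H : 'M[C]_(k.+1, k)) (xG : 'cV[C]_n) :
  b != 0 ->
  (0 < k)%N ->
  \rank (krylov A b k.+1) = k.+1 ->
  arnoldi_output A b Q H ->
  (* xG is the GMRES iterate x_k^G: in K_k(A,b) and minimizing the residual there *)
  (exists c : 'cV[C]_k, xG = krylov A b k *m c) ->
  (forall c : 'cV[C]_k, norm2 (b - A *m xG) <= norm2 (b - A *m (krylov A b k *m c))) ->
  (* min_{0<=j<=k} ||r_j^F|| <= sqrt(k+1) ||r_k^G|| *)
  exists j : nat, (j <= k)%N /\
    exists r, fom_res A b Q H j = Some r /\
      norm2 r <= sqrtC (k.+1)%:R * norm2 (b - A *m xG).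
Proof.
move=> hb _ _ har [c0 ->] _.
have [w [hw w0]] := w_exists har.
have [J [hJ hmax]] := @exists_max _ (fun i => `|mxe w 0 i|) k (fun i => normr_real _).
have wJpos : 0 < `|mxe w 0 J|.
  by apply: lt_le_trans (hmax 0%N (leq0n k)); rewrite w0 normr1 ltr01.
have wJ : mxe w 0 J != 0 by rewrite -normr_gt0.
have [r [hr hrn]] := fom_bound har hb hw w0 hJ wJ.
exists J; split => //; exists r; split => //.
have [X hX] := gmres_res c0 har hb.
case: (har) => hQ _ _ _ _.
rewrite hX norm2_Q //.
set s := norm2 b *: E0 C k - Hsq H *m X.
have ws : mxe (w *m s) 0 0 = norm2 b.
  rewrite /s mulmxBr mulmxA wHsq // mul0mx subr0 -scalemxAr mxeZ.
  rewrite (wJ_single (J := 0%N) w (leq0n k)); last first.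
    by move=> i hi; rewrite mxe_E0 (negbTE hi); case: ifP.
  by rewrite w0 mxe_E0 /= mul1r mulr1.
rewrite -(ler_pM2l wJpos) hrn.
have s0 : forall l, 0 <= `|mxe s l 0| by move=> l; apply: normr_ge0.
apply: le_trans (_ : `|mxe w 0 J| * \sum_(0 <= l < k.+1) `|mxe s l 0| <= _); last first.
  rewrite ler_wpM2l ?normr_ge0 // norm2_nat.
  exact: (sum_sqrt _ s0).
rewrite -{1}(ger0_norm (norm2_ge0 b)) -{1}ws mxe_mul.
apply: le_trans (ler_norm_sum _ _ _) _.
rewrite mulr_sumr; apply: ler_sum_nat => l /andP[_ hl].
by rewrite normrM ler_wpM2r // hmax.
Qed.
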